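(* Let $\alpha$ be a composition of $n$ and $w\in\mathfrak S_n$ with $D(w)\subseteq D(\alpha)$. Then in $\mathbb{F}[x_1,\dots,x_n]$, \[ \overline\pi_w x_{D(\alpha)}=w\,x_{D(\alpha)}+\sum_{x^d\prec x_{D(\alpha)}}c_dx^d,\qquad c_d\in\mathbb{Z}. \] Moreover, $w\,x_{D(\alpha)}$ is a descent monomial if and only if $D(w)=D(\alpha)$.
   Context: $\mathbb{F}$ is a field; $\mathfrak S_n$ permutes $x_1,\dots,x_n$; $\pi_if=\frac{x_if-x_{i+1}s_i(f)}{x_i-x_{i+1}}$, $\overline\pi_i=\pi_i-1$, and $\overline\pi_w=\overline\pi_{i_1}\cdots\overline\pi_{i_k}$ for a reduced word $w=s_{i_1}\cdots s_{i_k}$ (well defined since the $\overline\pi_i$ satisfy the $0$-Hecke relations). For $I\subseteq[n-1]$, $x_I=\prod_{i\in I}x_1x_2\cdots x_i$. $D(w)=\{i:w(i)>w(i+1)\}$; for a composition $\alpha$, $D(\alpha)$ is its set of partial sums below $n$. A descent monomial is one of the form $u\,x_{D(u)}=\prod_{i\in D(u)}x_{u(1)}\cdots x_{u(i)}$ for some $u\in\mathfrak S_n$. For a weak composition $d=(d_1,\dots,d_n)$, $x^d=x_1^{d_1}\cdots x_n^{d_n}$ and $\lambda(d)$ is the weakly decreasing rearrangement of $d$; $x^d\prec x^e$ means $\lambda(d)<\lambda(e)$ in lexicographic order (and $\preceq$ allows equality of $\lambda$). Integer coefficients are interpreted via their images in $\mathbb{F}$. *)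

(* Defs.v *)
From HB Require Import structures.
From mathcomp Require Import all_boot all_order all_algebra all_fingroup.
From mathcomp Require Import mpoly.
From Stdlib Require Import ClassicalEpsilon.
Set Implicit Arguments. Unset Strict Implicit. Unset Printing Implicit Defensive.
Import GRing.Theory.
Local Open Scope ring_scope.

(* Conventions: variables x_1..x_n are 'X_0 .. 'X_(n-1) (0-based ordinals).
   Subsets of [n-1] (descent sets) are seqs of nats with 1-based values.
   A permutation w : 'S_n acts by x_i |-> x_{w(i)}  (this is msym w). *)

Section Defs.
Variables (F : fieldType) (n : nat).

(* successor ordinal: i.+1 when i.+1 < n (only used in that case) *)
Definition nxt (i : 'I_n) : 'I_n := insubd i i.+1.

(* the simple transposition s_{i+1} (paper's numbering) swapping x_{i+1}, x_{i+2} *)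
Definition sgen (i : 'I_n) : 'S_n := tperm i (nxt i).

(* isobaric divided difference pi_i f = (x_i f - x_{i+1} s_i f)/(x_i - x_{i+1}),
   defined as the (unique) exact quotient in F[x]. *)
Definition pi_op (i : 'I_n) (f : {mpoly F[n]}) : {mpoly F[n]} :=
  epsilon (inhabits 0) (fun g : {mpoly F[n]} =>
    ('X_i - 'X_(nxt i)) * g = 'X_i * f - 'X_(nxt i) * msym (sgen i) f).

Definition pibar_op (i : 'I_n) (f : {mpoly F[n]}) : {mpoly F[n]} :=
  pi_op i f - f.

Definition pibar_word (s : seq 'I_n) (f : {mpoly F[n]}) : {mpoly F[n]} :=
  foldr pibar_op f s.

(* number of inversions = Coxeter length *)
Definition inv_count (w : 'S_n) : nat :=
  #|[set p : 'I_n * 'I_n | (p.1 < p.2)%N && (w p.2 < w p.1)%N]|.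

(* s = (i_1,...,i_k) is a reduced word for w = s_{i_1} ... s_{i_k}
   (product as composition of functions: w(j) = s_{i_1}(...(s_{i_k}(j)))) *)
Definition reduced_word (w : 'S_n) (s : seq 'I_n) : Prop :=
  all (fun i : 'I_n => (i.+1 < n)%N) s /\
  (forall j : 'I_n, w j = foldr (fun i x => sgen i x) j s) /\
  size s = inv_count w.

Definition Des (w : 'S_n) : seq nat :=
  [seq (val i).+1 | i <- [seq i : 'I_n <- enum 'I_n | (i.+1 < n)%N && (w (nxt i) < w i)%N]].

Definition is_composition (alpha : seq nat) : bool :=
  all (fun a => 0 < a)%N alpha && (sumn alpha == n).

Definition Dcomp (alpha : seq nat) : seq nat :=
  [seq s <- [seq sumn (take k alpha) | k <- iota 1 (size alpha)] | (s < n)%N].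

Definition xI (I : seq nat) : {mpoly F[n]} :=
  \prod_(i <- I) \prod_(j < n | (j < i)%N) 'X_j.

Definition descent_monomial (p : {mpoly F[n]}) : Prop :=
  exists u : 'S_n, p = msym u (xI (Des u)).

Definition lam (d : 'X_{1..n}) : seq nat := sort geq [seq d i | i <- enum 'I_n].

End Defs.

Fixpoint lexlt (s t : seq nat) : bool :=
  match s, t with
  | a :: s', b :: t' => (a < b)%N || ((a == b) && lexlt s' t')
  | _, _ => false
  end.

Definition mprec (n : nat) (d e : 'X_{1..n}) : bool := lexlt (lam d) (lam e).

(* Main.v *)
Require Import Defs.
From HB Require Import structures.
From mathcomp Require Import all_boot all_order all_algebra all_fingroup.
From mathcomp Require Import mpoly.
From mathcomp Require Import zify ring.
From Stdlib Require Import ClassicalEpsilon.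
Set Implicit Arguments. Unset Strict Implicit. Unset Printing Implicit Defensive.
Import GRing.Theory.

Section Comb.
Variable n : nat.

Lemma nxt_val (i : 'I_n) : (i.+1 < n)%N -> val (nxt i) = i.+1.
Proof. by move=> h; rewrite /nxt insubdK. Qed.

Lemma nxt_neq (i : 'I_n) : (i.+1 < n)%N -> (i == nxt i) = false.
Proof. move=> h; apply/negbTE; apply/eqP=> /(congr1 val); rewrite nxt_val //=; lia. Qed.

Lemma sgen_lt (i a b : 'I_n) : (i.+1 < n)%N ->
  ~~ ((a == i) && (b == nxt i)) -> ~~ ((a == nxt i) && (b == i)) ->
  (sgen i a < sgen i b)%N = (a < b)%N.
Proof.
move=> h; rewrite /sgen.
have hv := nxt_val h.
case: tpermP => [->|->|/eqP ha /eqP hb]; case: tpermP => [->|->|/eqP ha' /eqP hb'];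
  rewrite ?eqxx ?andbT ?andTb //= ?nxt_neq // ?[nxt i == i]eq_sym ?nxt_neq //;
  move=> H1 H2; rewrite ?hv; try lia.
- move: ha' hb'; rewrite -!(inj_eq val_inj) /= hv; lia.
- move: ha' hb'; rewrite -!(inj_eq val_inj) /= hv; lia.
- move: ha hb; rewrite -!(inj_eq val_inj) /= hv; lia.
- move: ha hb; rewrite -!(inj_eq val_inj) /= hv; lia.
Qed.


Definition invs (u : 'S_n) := [set p : 'I_n * 'I_n | (p.1 < p.2)%N && (u p.2 < u p.1)%N].

Lemma inv_countE u : inv_count u = #|invs u|.
Proof. by []. Qed.

Lemma inv_step (u : 'S_n) (i : 'I_n) : (i.+1 < n)%N ->
  ((u^-1)%g i < (u^-1)%g (nxt i))%N -> inv_count (u * sgen i)%g = (inv_count u).+1.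
Proof.
move=> h hlt; set p0 := (u^-1)%g i; set q0 := (u^-1)%g (nxt i).
have up0 : u p0 = i by rewrite /p0 permKV.
have uq0 : u q0 = nxt i by rewrite /q0 permKV.
have hv := nxt_val h.
rewrite !inv_countE.
have -> : invs (u * sgen i)%g = (p0, q0) |: invs u.
  apply/setP => [[a b]]; rewrite !inE /= !permM.
  case: (eqVneq (a, b) (p0, q0)) => [[-> ->]|hne] /=.
    by rewrite hlt up0 uq0 /sgen tpermL tpermR hv ltnSn.
  case: (boolP ((u a == i) && (u b == nxt i))) => [/andP[/eqP ha /eqP hb]|h1].
    have ea : a = p0 by apply: (@perm_inj _ u); rewrite up0.
    have eb : b = q0 by apply: (@perm_inj _ u); rewrite uq0.
    by rewrite ea eb eqxx in hne.
  case: (boolP ((u a == nxt i) && (u b == i))) => [/andP[/eqP ha /eqP hb]|h2].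
    have ea : a = q0 by apply: (@perm_inj _ u); rewrite uq0.
    have eb : b = p0 by apply: (@perm_inj _ u); rewrite up0.
    rewrite ea eb; move: hlt; rewrite /p0 /q0 => hlt; apply/idP/idP => /andP[H _]; lia.
  by rewrite sgen_lt // andbC.
rewrite cardsU1 inE /= up0 uq0 hv; have -> : (i.+1 < i)%N = false by lia.
by rewrite andbF.
Qed.

Lemma sgen_invol (i : 'I_n) : (sgen i * sgen i)%g = 1%g.
Proof. by apply/permP => x; rewrite permM /sgen tpermK perm1. Qed.

Lemma inv_cases (u : 'S_n) (i : 'I_n) : (i.+1 < n)%N ->
  if ((u^-1)%g i < (u^-1)%g (nxt i))%N then inv_count (u * sgen i)%g = (inv_count u).+1
  else (inv_count (u * sgen i)%g).+1 = inv_count u.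
Proof.
move=> h; case: ifP => hlt; first exact: inv_step.
set v := (u * sgen i)%g.
have -> : u = (v * sgen i)%g by rewrite /v -mulgA sgen_invol mulg1.
apply/esym; apply: inv_step => //.
rewrite /v invMg /sgen tpermV !permM tpermL tpermR.
have hne : (u^-1)%g i != (u^-1)%g (nxt i).
  by rewrite (inj_eq (@perm_inj _ _)) nxt_neq.
by rewrite ltn_neqAle eq_sym hne /= leqNgt hlt.
Qed.

Lemma inv_count1 : inv_count (1 : 'S_n)%g = 0%N.
Proof. by rewrite inv_countE; apply/eqP; rewrite cards_eq0; apply/eqP/setP=> [[a b]]; rewrite !inE !perm1 /=; apply/negbTE; apply/negP=> /andP[]; lia. Qed.

Lemma inv_word (t : seq 'I_n) (u : 'S_n) : all (fun i : 'I_n => (i.+1 < n)%N) t ->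
  (forall j, u j = foldr (fun i x => sgen i x) j t) -> (inv_count u <= size t)%N.
Proof.
elim: t u => [|i t IH] u /=.
  move=> _ hu; have -> : u = 1%g by apply/permP => j; rewrite hu perm1.
  by rewrite inv_count1.
move=> /andP[hi ha] hu.
have hu' : forall j, (u * sgen i)%g j = foldr (fun i x => sgen i x) j t.
  by move=> j; rewrite permM hu /sgen tpermK.
have := IH _ ha hu'.
have := inv_cases (u * sgen i)%g hi; rewrite -mulgA sgen_invol mulg1; case: ifP => _; lia.
Qed.

Lemma red_cons (w : 'S_n) (i : 'I_n) (t : seq 'I_n) :
  reduced_word w (i :: t) ->
  [/\ (i.+1 < n)%N, reduced_word (w * sgen i)%g t &
      (((w * sgen i)^-1)%g i < ((w * sgen i)^-1)%g (nxt i))%N].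
Proof.
case=> /= /andP[hi ha] [hw hs].
set w' := (w * sgen i)%g.
have hw' : forall j, w' j = foldr (fun i x => sgen i x) j t.
  by move=> j; rewrite permM hw /sgen tpermK.
have hle := inv_word ha hw'.
have ew : w = (w' * sgen i)%g by rewrite /w' -mulgA sgen_invol mulg1.
have := inv_cases w' hi; rewrite -ew; case: ifP => hlt hc.
  by split => //; split => //; split => //; lia.
exfalso; lia.
Qed.

End Comb.

Section Lex.
Variable B : nat.
Hypothesis B1 : (1 < B)%N.

Definition Ls (s : seq nat) : nat := sumn [seq B ^ x | x <- s].

Lemma Ls_le a s : all (fun x => x <= a)%N s -> (Ls s <= size s * B ^ a)%N.
Proof.
elim: s => [|x s IH] //= /andP[hx hs].
have := IH hs; have : (B ^ x <= B ^ a)%N by rewrite leq_exp2l //; lia.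
rewrite /Ls /=; lia.
Qed.

Lemma geq_trans' : transitive geq.
Proof. by move=> a b c /= h1 h2; apply: leq_trans h1. Qed.

Lemma lex_Ls p q : size p = size q -> (size p < B)%N -> sorted geq p -> sorted geq q ->
  lexlt p q -> (Ls p < Ls q)%N.
Proof.
elim: p q => [|a p IH] [|b q] //= [hs] hsz hp hq.
case/orP => [hab|/andP[/eqP hab hl]].
- have hpa : all (fun x => x <= a)%N p.
    have := order_path_min geq_trans' hp; apply: sub_all => x /=; done.
  have h1 := Ls_le hpa.
  have h2 : (B ^ a.+1 <= B ^ b)%N by rewrite leq_exp2l //; lia.
  have h3 : ((size p).+1 * B ^ a < B * B ^ a)%N by rewrite ltn_pmul2r ?expn_gt0; lia.
  rewrite /Ls /= -/(Ls p) -/(Ls q); rewrite expnS in h2; rewrite mulSn in h3; lia.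
- subst b; rewrite /Ls /= -/(Ls p) -/(Ls q).
  have := IH q hs (ltnW hsz) (path_sorted hp) (path_sorted hq) hl; lia.
Qed.

Lemma lex_total p q : size p = size q -> [|| p == q, lexlt p q | lexlt q p].
Proof.
elim: p q => [|a p IH] [|b q] //= [hs].
case: (ltngtP a b) => [h|h|->] //=; rewrite ?orbT //.
by rewrite eqseq_cons eqxx /=; have := IH q hs.
Qed.

End Lex.

Section Exps.
Variable n : nat.
Local Notation B := n.+2.

Definition Phi (m : 'X_{1..n}) : nat := (\sum_(k < n) B ^ m k)%N.

Lemma Phi_lam (m : 'X_{1..n}) : Phi m = Ls B (lam m).
Proof.
rewrite /Ls /lam.
have /perm_sumn <- : perm_eq [seq B ^ x | x <- [seq m i | i <- enum 'I_n]]
   [seq B ^ x | x <- sort geq [seq m i | i <- enum 'I_n]].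
  by apply: perm_map; rewrite perm_sym perm_sort.
rewrite -map_comp sumnE big_map big_enum /=; done.
Qed.

Lemma size_lam (m : 'X_{1..n}) : size (lam m) = n.
Proof. by rewrite size_sort size_map size_enum_ord. Qed.

Lemma sorted_lam (m : 'X_{1..n}) : sorted geq (lam m).
Proof. apply: sort_sorted => a b /=; exact: leq_total. Qed.

Lemma Phi_mprec (d e : 'X_{1..n}) : (Phi d < Phi e)%N -> mprec d e.
Proof.
move=> h; rewrite /mprec.
have := lex_total (etrans (size_lam d) (esym (size_lam e))).
case/or3P => [/eqP he|//|hl].
- by move: h; rewrite !Phi_lam he ltnn.
- have := @lex_Ls n.+2 (ltac:(lia)) (lam e) (lam d) (etrans (size_lam e) (esym (size_lam d))) _ (sorted_lam e) (sorted_lam d) hl.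
  rewrite size_lam -!Phi_lam => /(_ (ltac:(lia))); lia.
Qed.


Definition eD (D : seq nat) : 'X_{1..n} := [multinom count (fun t => (k < t)%N) D | k < n].

Lemma eD_decr D (p q : 'I_n) : (p <= q)%N -> (eD D q <= eD D p)%N.
Proof. move=> h; rewrite !mnmE; apply: sub_count => t /=; lia. Qed.

Lemma eD_step D (k k1 : 'I_n) : (k1 : nat) = k.+1 -> eD D k = (eD D k1 + count_mem k.+1 D)%N.
Proof.
move=> hk; rewrite !mnmE hk; elim: D => [|t D IH] //=; rewrite IH.
case: (eqVneq t k.+1) => [->|ne] /=; first by rewrite ltnSn ltnn; lia.
have : (k < t)%N = (k.+1 < t)%N by move: ne => /eqP; lia.
move=> ->; lia.
Qed.

Definition Inc (e : 'X_{1..n}) (w : 'S_n) := forall p q : 'I_n, (p < q)%N -> e p = e q -> (w p < w q)%N.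

Lemma Des_mem (w : 'S_n) (k k1 : 'I_n) : (k1 : nat) = k.+1 -> (w k1 < w k)%N -> k.+1 \in Des w.
Proof.
move=> hk hw; apply/mapP; exists k => //; rewrite mem_filter mem_enum andbT.
have hn : (k.+1 < n)%N by rewrite -hk ltn_ord.
have -> : nxt k = k1 by apply: val_inj; rewrite /nxt insubdK.
by rewrite hn hw.
Qed.

Lemma Des_memP (w : 'S_n) t : t \in Des w ->
  exists k k1 : 'I_n, [/\ (k1 : nat) = k.+1, t = k.+1 & (w k1 < w k)%N].
Proof.
case/mapP => k; rewrite mem_filter mem_enum andbT => /andP[hn hw] ->.
by exists k, (nxt k); split => //; rewrite /nxt insubdK.
Qed.

Lemma Inc_of_Des D (w : 'S_n) : {subset Des w <= D} -> Inc (eD D) w.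
Proof.
move=> hsub.
have adj : forall k k1 : 'I_n, (k1 : nat) = k.+1 -> eD D k = eD D k1 -> (w k < w k1)%N.
  move=> k k1 hk he.
  have hc : count_mem k.+1 D = 0%N by move: (eD_step D hk); rewrite he; lia.
  have hD : k.+1 \notin D by apply/count_memPn.
  have hne : w k != w k1.
    by rewrite (inj_eq (@perm_inj _ _)) -(inj_eq val_inj) /= hk ltn_eqF.
  rewrite ltn_neqAle hne /= leqNgt; apply/negP => hlt.
  by move: hD; rewrite (hsub _ (Des_mem hk hlt)).
move=> p q hpq.
suff : forall d (q : 'I_n), (q : nat) = (p + d.+1)%N -> eD D p = eD D q -> (w p < w q)%N.
  move=> H he; apply: (H (q - p.+1)%N q) => // /=; lia.
elim => [|d IH] q' hq he; first by apply: adj => //; lia.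
have hq1 : (p + d.+1 < n)%N by have := ltn_ord q'; lia.
set q1 : 'I_n := Ordinal hq1.
have e1 : eD D p = eD D q1.
  apply/eqP; rewrite eqn_leq; apply/andP; split.
    by rewrite he; apply: eD_decr; rewrite /= hq; lia.
  by apply: eD_decr => /=; lia.
apply: (ltn_trans (IH q1 erefl e1)); apply: adj => /=; first lia.
by rewrite -e1.
Qed.

Lemma Phi_perm (m : 'X_{1..n}) (s : 'S_n) : Phi [multinom m (s k) | k < n] = Phi m.
Proof.
rewrite /Phi [RHS](reindex_inj (@perm_inj _ s)); apply: eq_bigr => k _; by rewrite mnmE.
Qed.

Definition mset (i j : 'I_n) (m : 'X_{1..n}) (a b : nat) : 'X_{1..n} :=
  [multinom if k == i then a else if k == j then b else m k | k < n].

Lemma Phi_mset (i j : 'I_n) m a b : i != j ->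
  (Phi (mset i j m a b) + B ^ m i + B ^ m j = Phi m + B ^ a + B ^ b)%N.
Proof.
move=> hij; have hji : j != i by rewrite eq_sym.
rewrite /Phi (bigD1 i) // (bigD1 j) //= ?(negbTE hij) //.
rewrite [\sum_(k < n) B ^ m k](bigD1 i) // [\sum_(k < n | k != i) B ^ m k](bigD1 j) //=.
rewrite !mnmE eqxx (negbTE hji) eqxx.
have -> : (\sum_(k < n | (k != i) && (k != j)) B ^ mset i j m a b k = \sum_(k < n | (k != i) && (k != j)) B ^ m k)%N.
  apply: eq_bigr => k /andP[hi hj]; by rewrite mnmE (negbTE hi) (negbTE hj).
set S := (\sum_(k < n | (k != i) && (k != j)) B ^ m k)%N. lia. Qed.

Lemma convexB a b x y : (b < x)%N -> (b < y)%N -> (x + y = a + b)%N ->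
  (B ^ x + B ^ y < B ^ a + B ^ b)%N.
Proof.
move=> hx hy hs.
have ex : x = (b + (x - b))%N by lia.
have ea : a = (y + (x - b))%N by lia.
have hU : (B <= B ^ (x - b))%N.
  by rewrite -{1}(expn1 B) leq_exp2l //; lia.
have hP : (B ^ b < B ^ y)%N by rewrite ltn_exp2l //.
rewrite ea [in B ^ x]ex !expnD.
move: hU hP; set U := B ^ (x - b); set P := B ^ y; set Q := B ^ b => hU hP.
nia.
Qed.

End Exps.

Section DC.
Variable n : nat.

Lemma psum_step (al : seq nat) k : (k < size al)%N ->
  sumn (take k.+1 al) = (sumn (take k al) + nth 0 al k)%N.
Proof. by move=> h; rewrite (take_nth 0 h) sumn_rcons. Qed.

Lemma psum_mono (al : seq nat) : all (fun a => 0 < a)%N al ->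
  forall k d, (k + d.+1 <= size al)%N -> (sumn (take k al) < sumn (take (k + d.+1) al))%N.
Proof.
move=> hpos k; elim => [|d IH] h.
  rewrite addn1 psum_step; last lia.
  have : (0 < nth 0 al k)%N by apply: (allP hpos); apply: mem_nth; move: h; rewrite addn1.
  lia.
have := IH ltac:(lia); rewrite (_ : (k + d.+2 = (k + d.+1).+1)%N); last lia.
rewrite psum_step; last lia.
lia.
Qed.

Lemma psum_ge (al : seq nat) : all (fun a => 0 < a)%N al ->
  forall k, (k <= size al)%N -> (k <= sumn (take k al))%N.
Proof.
move=> hpos; elim => [|k IH] h //.
rewrite psum_step; last lia.
have : (0 < nth 0 al k)%N by apply: (allP hpos); apply: mem_nth; exact: h.
have := IH ltac:(lia); lia.
Qed.

Lemma Dcomp_uniq al : is_composition n al -> uniq (Dcomp n al).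
Proof.
case/andP => hpos _; apply: filter_uniq; rewrite map_inj_in_uniq ?iota_uniq //.
move=> k l; rewrite !mem_iota => hk hl he; apply/eqP; apply/negP => /negP hne.
case: (ltngtP k l) => [hkl|hkl|]; last by move=> /eqP; rewrite (negbTE hne).
- have := psum_mono hpos (d := (l - k).-1) (k := k); rewrite (_ : (k + (l - k).-1.+1 = l)%N); last lia.
  by move=> /(_ ltac:(lia)); rewrite he ltnn.
- have := psum_mono hpos (d := (k - l).-1) (k := l); rewrite (_ : (l + (k - l).-1.+1 = k)%N); last lia.
  by move=> /(_ ltac:(lia)); rewrite he ltnn.
Qed.

Lemma Dcomp_range al t : is_composition n al -> t \in Dcomp n al -> (0 < t < n)%N.
Proof.
case/andP => hpos _; rewrite mem_filter => /andP[htn /mapP[k]].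
rewrite mem_iota => hk et; subst t; rewrite htn andbT.
have := psum_ge hpos (k := k) ltac:(lia); lia.
Qed.

Lemma Des_range (w : 'S_n) t : t \in Des w -> (0 < t < n)%N.
Proof. by case/Des_memP => k [k1 [hk -> _]]; have := ltn_ord k1; lia. Qed.

Lemma Des_uniq (w : 'S_n) : uniq (Des w).
Proof.
rewrite /Des map_inj_uniq ?filter_uniq //; last by move=> a b [] /val_inj.
by rewrite -enumT enum_uniq.
Qed.

Lemma mem_eD D (k k1 : 'I_n) : (k1 : nat) = k.+1 -> (k.+1 \in D) = (eD n D k != eD n D k1).
Proof.
move=> hk; rewrite (eD_step D hk).
case h : (k.+1 \in D).
  have : (0 < count_mem k.+1 D)%N by rewrite lt0n; apply/eqP => /count_memPn; rewrite h.
  move=> hc; apply/esym/eqP; lia.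
have /count_memPn -> : k.+1 \notin D by rewrite h.
by rewrite addn0 eqxx.
Qed.

End DC.

Section Perm2.
Variable n : nat.

Lemma sorted_decr (f : 'I_n -> nat) : (forall p q : 'I_n, (p <= q)%N -> (f q <= f p)%N) ->
  sorted geq [seq f i | i <- enum 'I_n].
Proof.
move=> hf; rewrite sorted_map.
have : sorted (relpre val ltn) (enum 'I_n) by rewrite -sorted_map val_enum_ord iota_ltn_sorted.
apply: sub_sorted => a b /= hab; apply: hf; exact: ltnW.
Qed.

Lemma decr_perm_eq (f g : 'I_n -> nat) (s : 'S_n) :
  (forall p q : 'I_n, (p <= q)%N -> (f q <= f p)%N) ->
  (forall p q : 'I_n, (p <= q)%N -> (g q <= g p)%N) ->
  (forall j, f j = g (s j)) -> forall j, f j = g j.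
Proof.
move=> hf hg hfg.
have hp : perm_eq [seq f i | i <- enum 'I_n] [seq g i | i <- enum 'I_n].
  have -> : [seq f i | i <- enum 'I_n] = [seq g i | i <- [seq s i | i <- enum 'I_n]].
    by elim: (enum 'I_n) => //= x r ->; rewrite hfg.
  apply: perm_map; apply: uniq_perm.
  - by rewrite map_inj_uniq ?enum_uniq //; exact: perm_inj.
  - exact: enum_uniq.
  - move=> x; rewrite mem_enum; apply/mapP; exists ((s^-1)%g x); first by rewrite mem_enum.
    by rewrite permKV.
have anti : antisymmetric geq by move=> a b /andP[h1 h2]; apply/eqP; rewrite eqn_leq; apply/andP; split.
have E := sorted_eq geq_trans' anti (sorted_decr hf) (sorted_decr hg) hp.
move/eq_in_map: E => E j; apply: E; by rewrite mem_enum.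
Qed.

Lemma Inc_perm_id (e : 'X_{1..n}) (w u : 'S_n) : Inc e w -> Inc e u ->
  (forall j, e j = e ((w * u^-1)%g j)) -> w = u.
Proof.
move=> hw hu he.
set s := (w * u^-1)%g in he.
have hsw : forall j, u (s j) = w j by move=> j; rewrite /s permM permKV.
have hmon : forall p q : 'I_n, (p < q)%N -> e p = e q -> (s p < s q)%N.
  move=> p q hpq hepq; have H := hw p q hpq hepq; rewrite -!hsw in H.
  case: (ltngtP (s p) (s q)) => [//|h|h].
    have := hu (s q) (s p) h; rewrite -!he -hepq => /(_ erefl); lia.
  have /(@perm_inj _ s) e1 : s p = s q by apply: val_inj.
  by move: hpq; rewrite e1 ltnn.
suff hs : forall N (j : 'I_n), (j < N)%N -> s j = j.
  by apply/permP => j; rewrite -hsw (hs n j (ltn_ord j)).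
elim => [|N IH] j hj //.
case: (ltngtP (s j) j) => [h|h|/val_inj //].
- have e1 := IH (s j) ltac:(lia).
  have : s (s j) = s j := e1; move/(@perm_inj _ s) => e2; move: h; rewrite e2 ltnn //.
- set k := (s^-1)%g j.
  have sk : s k = j by rewrite /k permKV.
  case: (ltngtP k j) => [hk|hk|/val_inj ekj].
  + have := IH k ltac:(lia); rewrite sk => ejk; move: hk; rewrite -ejk ltnn //.
  + have := hmon j k hk; rewrite sk => /(_ _) h2.
    have : e j = e k by rewrite [e k]he sk.
    move/h2; lia.
  + by move: h; rewrite -ekj sk ekj ltnn.
Qed.

End Perm2.

Local Open Scope ring_scope.

Section Poly.
Variables (F : fieldType) (n : nat).
Implicit Types (f g : {mpoly F[n]}) (m : 'X_{1..n}).


Lemma Xdiff_neq0 (i j : 'I_n) : i != j -> ('X_i - 'X_j : {mpoly F[n]}) != 0.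
Proof.
move=> hij; apply/eqP => /(congr1 (mcoeff U_(i))).
by rewrite mcoeffB !mcoeffXU eqxx eq_sym (negbTE hij) subr0 mcoeff0; apply/eqP; exact: oner_neq0.
Qed.

Lemma pi_op_spec (i : 'I_n) f g : (i.+1 < n)%N ->
  ('X_i - 'X_(nxt i)) * g = 'X_i * f - 'X_(nxt i) * msym (sgen i) f -> pi_op i f = g.
Proof.
move=> hi hg; rewrite /pi_op.
set P := fun g0 : {mpoly F[n]} => _.
have := @epsilon_spec _ (inhabits 0) P (ex_intro _ g hg).
rewrite -/P => hP.
have hne : i != nxt i.
  by apply/eqP => /(congr1 val); rewrite /nxt insubdK //=; lia.
apply/eqP; rewrite -subr_eq0; apply/eqP.
have : ('X_i - 'X_(nxt i)) * (epsilon (inhabits 0) P - g) = 0 :> {mpoly F[n]}.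
  by rewrite mulrBr hP hg subrr.
by move/eqP; rewrite mulf_eq0 (negbTE (Xdiff_neq0 hne)) /= => /eqP.
Qed.


Lemma mset_dec (i j : 'I_n) m (a b : nat) : i != j ->
  mset i j m a b = (mset i j m 0 0 + U_(i) *+ a + U_(j) *+ b)%MM.
Proof.
move=> hij; apply/mnmP => k; rewrite !mnmDE !mulmnE /mset /mnm1 !mnmE.
have hji : (j == i) = false by rewrite eq_sym (negbTE hij).
case: (eqVneq k i) => [->|hki]; first by rewrite ?eqxx ?hji ?(negbTE hij) /=; lia.
rewrite [j == k]eq_sym; case: (k == j) => /=; lia.
Qed.

Lemma Xmset (i j : 'I_n) m (a b : nat) : i != j ->
  'X_[mset i j m a b] = 'X_[mset i j m 0 0] * 'X_i ^+ a * 'X_j ^+ b :> {mpoly F[n]}.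
Proof. by move=> hij; rewrite (mset_dec m a b hij) !mpolyXD !mpolyXn. Qed.

Lemma mset_id (i j : 'I_n) m : mset i j m (m i) (m j) = m.
Proof.
apply/mnmP => k; rewrite mnmE.
by case: (eqVneq k i) => [->|_] //; case: (eqVneq k j) => [->|_].
Qed.

Lemma msym_mset (i : 'I_n) m (a b : nat) : (i.+1 < n)%N ->
  msym (sgen i) 'X_[mset i (nxt i) m a b] = 'X_[mset i (nxt i) m b a] :> {mpoly F[n]}.
Proof.
move=> hi; have hij : i != nxt i by rewrite nxt_neq.
rewrite msymX; congr 'X_[_]; apply/mnmP => k; rewrite !mnmE /sgen tpermV.
have hji : (nxt i == i) = false by rewrite eq_sym (negbTE hij).
case: tpermP => [->|->|h1 h2]; rewrite ?eqxx ?hji ?(negbTE hij) //.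
by move/eqP/negbTE: h1 => ->; move/eqP/negbTE: h2 => ->.
Qed.


Lemma pibar_mon (i : 'I_n) m : (i.+1 < n)%N -> (m (nxt i) <= m i)%N ->
  pibar_op i 'X_[m] = \sum_(k < (m i - m (nxt i))%N)
     'X_[mset i (nxt i) m ((m i).-1 - k)%N (m (nxt i) + k.+1)%N] :> {mpoly F[n]}.
Proof.
move=> hi hba; have hij : i != nxt i by rewrite nxt_neq.
set j := nxt i in hij hba *; set a := m i in hba *; set b := m j in hba *.
set c := (a - b)%N.
set x : {mpoly F[n]} := 'X_i; set y : {mpoly F[n]} := 'X_j.
set M : {mpoly F[n]} := 'X_[mset i j m 0 0].
have hX : 'X_[m] = M * x ^+ a * y ^+ b by rewrite -{1}(mset_id i j m) Xmset.
have hsX : msym (sgen i) 'X_[m] = M * x ^+ b * y ^+ a.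
  by rewrite -{1}(mset_id i j m) msym_mset // Xmset.
have ea : a = (b + c)%N by rewrite /c; lia.
set S := \sum_(k < c.+1) x ^+ (c - k) * y ^+ k.
have hS : (x - y) * S = x ^+ c.+1 - y ^+ c.+1 by rewrite subrXX.
have hpi : pi_op i 'X_[m] = M * (x * y) ^+ b * S.
  apply: pi_op_spec => //; rewrite -/j -/x -/y hsX hX.
  transitivity (M * (x * y) ^+ b * ((x - y) * S)); first ring.
  rewrite hS ea !exprD exprMn !exprS; ring.
rewrite /pibar_op hpi hX /S big_ord_recl /= subn0 expr0 mulr1.
have -> : \sum_(k < c) 'X_[mset i j m (a.-1 - k) (b + k.+1)]
   = M * (x * y) ^+ b * \sum_(k < c) x ^+ (c - bump 0 k) * y ^+ bump 0 k.
  rewrite mulr_sumr; apply: eq_bigr => k _.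
  rewrite Xmset // -/M -/x -/y.
  have -> : (a.-1 - k = b + (c - bump 0 k))%N by rewrite /bump /=; have := ltn_ord k; lia.
  rewrite /bump /= add1n !exprD exprMn; ring.
rewrite ea exprD exprMn; ring.
Qed.


Definition Qprop (i : 'I_n) f g :=
  ('X_i - 'X_(nxt i)) * g = 'X_i * f - 'X_(nxt i) * msym (sgen i) f.

Lemma msym_sgenK (i : 'I_n) f : msym (sgen i) (msym (sgen i) f) = f.
Proof. by rewrite -msymMm sgen_invol msym1m. Qed.

Lemma ex_quot_mon (i : 'I_n) m : (i.+1 < n)%N -> exists g, Qprop i 'X_[m] g.
Proof.
move=> hi; have hij : i != nxt i by rewrite nxt_neq.
wlog hba : m / (m (nxt i) <= m i)%N.
  move=> H; case: (leqP (m (nxt i)) (m i)) => [h|h]; first exact: H.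
  set m' := mset i (nxt i) m (m (nxt i)) (m i).
  have hm' : (m' (nxt i) <= m' i)%N.
    by rewrite /m' /mset !mnmE eqxx eq_sym (negbTE hij) eqxx; lia.
  have hsm : msym (sgen i) 'X_[m'] = 'X_[m] :> {mpoly F[n]}.
    by rewrite /m' msym_mset // mset_id.
  case: (H m' hm') => g' hg'.
  have hsm2 : msym (sgen i) 'X_[m] = 'X_[m'] :> {mpoly F[n]} by rewrite -hsm msym_sgenK.
  exists ('X_[m] + 'X_[m'] - g'); move: hg'; rewrite /Qprop hsm hsm2 => hg'.
  rewrite mulrBr hg'; ring.
set j := nxt i in hij hba *; set a := m i in hba *; set b := m j in hba *.
set c := (a - b)%N.
set x : {mpoly F[n]} := 'X_i; set y : {mpoly F[n]} := 'X_j.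
set M : {mpoly F[n]} := 'X_[mset i j m 0 0].
have hX : 'X_[m] = M * x ^+ a * y ^+ b by rewrite -{1}(mset_id i j m) Xmset.
have hsX : msym (sgen i) 'X_[m] = M * x ^+ b * y ^+ a.
  by rewrite -{1}(mset_id i j m) msym_mset // Xmset.
have ea : a = (b + c)%N by rewrite /c; lia.
set S := \sum_(k < c.+1) x ^+ (c - k) * y ^+ k.
have hS : (x - y) * S = x ^+ c.+1 - y ^+ c.+1 by rewrite subrXX.
exists (M * (x * y) ^+ b * S); rewrite /Qprop -/j -/x -/y hsX hX.
transitivity (M * (x * y) ^+ b * ((x - y) * S)); first ring.
rewrite hS ea !exprD exprMn !exprS; ring.
Qed.

Lemma msym_sum (s : 'S_n) (I : Type) (r : seq I) (P : pred I) (E : I -> {mpoly F[n]}) :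
  msym s (\sum_(k <- r | P k) E k) = \sum_(k <- r | P k) msym s (E k).
Proof. exact: raddf_sum. Qed.

Lemma ex_quot (i : 'I_n) f : (i.+1 < n)%N -> exists g, Qprop i f g.
Proof.
move=> hi; rewrite [f]mpolyE.
elim: (msupp f) => [|m r [g hg]].
  by exists 0; rewrite /Qprop big_nil msym0 !mulr0 subrr.
have [g1 hg1] := ex_quot_mon m hi.
exists (f@_m *: g1 + g); move: hg hg1; rewrite /Qprop big_cons msymD msymZ => hg hg1.
rewrite mulrDr -scalerAr hg1 hg -!mul_mpolyC; ring.
Qed.

Lemma pi_op_prop (i : 'I_n) f : (i.+1 < n)%N -> Qprop i f (pi_op i f).
Proof.
move=> hi; have [g hg] := ex_quot f hi.
by rewrite (pi_op_spec hi hg).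
Qed.

Lemma pi_opD (i : 'I_n) f g : (i.+1 < n)%N -> pi_op i (f + g) = pi_op i f + pi_op i g.
Proof.
move=> hi; apply: pi_op_spec => //.
have := pi_op_prop f hi; have := pi_op_prop g hi; rewrite /Qprop msymD => h1 h2.
by rewrite mulrDr h1 h2; ring.
Qed.

Lemma pi_opZ (i : 'I_n) c f : (i.+1 < n)%N -> pi_op i (c *: f) = c *: pi_op i f.
Proof.
move=> hi; apply: pi_op_spec => //.
have := pi_op_prop f hi; rewrite /Qprop msymZ => h1.
by rewrite -scalerAr h1 -!scalerAr scalerBr.
Qed.

Lemma pibar_opD (i : 'I_n) f g : (i.+1 < n)%N -> pibar_op i (f + g) = pibar_op i f + pibar_op i g.
Proof. by move=> hi; rewrite /pibar_op pi_opD //; ring. Qed.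

Lemma pibar_opZ (i : 'I_n) c f : (i.+1 < n)%N -> pibar_op i (c *: f) = c *: pibar_op i f.
Proof. by move=> hi; rewrite /pibar_op pi_opZ // scalerBr. Qed.

Lemma pibar_op0 (i : 'I_n) : (i.+1 < n)%N -> pibar_op i (0 : {mpoly F[n]}) = 0.
Proof. by move=> hi; have := @pibar_opZ i 0 0 hi; rewrite !scale0r. Qed.

Lemma pibar_swap (i : 'I_n) f : (i.+1 < n)%N ->
  pibar_op i (msym (sgen i) f) = - pibar_op i f.
Proof.
move=> hi; rewrite /pibar_op.
have -> : pi_op i (msym (sgen i) f) = f + msym (sgen i) f - pi_op i f.
  apply: pi_op_spec => //; have := pi_op_prop f hi; rewrite /Qprop msym_sgenK => h.
  by rewrite mulrBr h; ring.
ring.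
Qed.

End Poly.

Section G.
Variables (F : fieldType) (n : nat).
Implicit Types (f g p q : {mpoly F[n]}) (m d : 'X_{1..n}).

Definition Gd (K : nat) p := forall d, exists c : int, p@_d = c%:~R /\ ((K <= Phi d)%N -> c = 0).

Lemma G0 K : Gd K 0.
Proof. by move=> d; exists 0; rewrite mcoeff0. Qed.

Lemma GD K p q : Gd K p -> Gd K q -> Gd K (p + q).
Proof.
move=> hp hq d; have [c1 [h1 h1']] := hp d; have [c2 [h2 h2']] := hq d.
exists (c1 + c2); rewrite mcoeffD h1 h2 rmorphD; split => // h.
by rewrite h1' // h2'.
Qed.

Lemma GN K p : Gd K p -> Gd K (- p).
Proof.
move=> hp d; have [c1 [h1 h1']] := hp d.
exists (- c1); rewrite mcoeffN h1 rmorphN; split => // h.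
by rewrite h1'.
Qed.

Lemma GZ K p (z : int) : Gd K p -> Gd K (z%:~R *: p).
Proof.
move=> hp d; have [c1 [h1 h1']] := hp d.
exists (z * c1); rewrite mcoeffZ h1 rmorphM; split => // h.
by rewrite h1' // mulr0.
Qed.

Lemma GX K m : (Phi m < K)%N -> Gd K 'X_[m].
Proof.
move=> hm d; rewrite mcoeffX; case: eqP => [e|_]; last by exists 0.
subst d; exists 1; split => //; lia.
Qed.

Lemma Gsum K (I : Type) (r : seq I) (P : pred I) (E : I -> {mpoly F[n]}) :
  (forall k, P k -> Gd K (E k)) -> Gd K (\sum_(k <- r | P k) E k).
Proof.
move=> h; elim/big_ind: _ => //; [exact: G0 | exact: GD].
Qed.

Lemma G_lt K p d : Gd K p -> p@_d != 0 -> (Phi d < K)%N.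
Proof.
move=> hp; have [c [h1 h1']] := hp d; rewrite h1.
case: (leqP K (Phi d)) => // hK; by rewrite h1' // eqxx.
Qed.

Lemma convex_weak a b x y : (b <= x)%N -> (b <= y)%N -> (x + y = a + b)%N ->
  (n.+2 ^ x + n.+2 ^ y <= n.+2 ^ a + n.+2 ^ b)%N.
Proof.
move=> hx hy hs.
case: (eqVneq x b) => [ex|nx]. { subst x; have -> : y = a by lia. lia. }
case: (eqVneq y b) => [ey|ny]. { subst y; have -> : x = a by lia. lia. }
apply: ltnW; apply: convexB; lia.
Qed.


Lemma Phi_swap (i j : 'I_n) m : i != j -> Phi (mset i j m (m j) (m i)) = Phi m.
Proof. move=> hij; have := Phi_mset m (m j) (m i) hij; lia. Qed.

Lemma G_pibar_mon (i : 'I_n) m K : (i.+1 < n)%N -> (Phi m < K)%N ->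
  Gd K (pibar_op i ('X_[m] : {mpoly F[n]})).
Proof.
move=> hi; have hij : i != nxt i by rewrite nxt_neq.
wlog hba : m / (m (nxt i) <= m i)%N.
  move=> H hK; case: (leqP (m (nxt i)) (m i)) => [h|h]; first exact: H.
  set m' := mset i (nxt i) m (m (nxt i)) (m i).
  have hm' : (m' (nxt i) <= m' i)%N.
    by rewrite /m' /mset !mnmE eqxx eq_sym (negbTE hij) eqxx; lia.
  have hsm : msym (sgen i) 'X_[m'] = 'X_[m] :> {mpoly F[n]}.
    by rewrite /m' msym_mset // mset_id.
  rewrite -hsm pibar_swap //; apply: GN; apply: H => //.
  by rewrite /m' Phi_swap.
move=> hK; rewrite pibar_mon //; apply: Gsum => k _; apply: GX.
have hk := ltn_ord k.
have := Phi_mset m ((m i).-1 - k) (m (nxt i) + k.+1) hij.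
have := @convex_weak (m i) (m (nxt i)) ((m i).-1 - k) (m (nxt i) + k.+1).
move=> /(_ ltac:(lia) ltac:(lia) ltac:(lia)); lia.
Qed.

Lemma pibar_sum (i : 'I_n) (r : seq 'X_{1..n}) (c : 'X_{1..n} -> F) :
  (i.+1 < n)%N ->
  pibar_op i (\sum_(m <- r) c m *: ('X_[m] : {mpoly F[n]})) =
  \sum_(m <- r) c m *: pibar_op i 'X_[m].
Proof.
move=> hi; elim: r => [|m r IH]; first by rewrite !big_nil pibar_op0.
by rewrite !big_cons pibar_opD // pibar_opZ // IH.
Qed.

Lemma G_pibar (i : 'I_n) K p : (i.+1 < n)%N -> Gd K p -> Gd K (pibar_op i p).
Proof.
move=> hi hp; rewrite (mpolyE p) pibar_sum // big_seq; apply: Gsum => m hm.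
have [c [hc _]] := hp m; rewrite hc; apply: GZ; apply: G_pibar_mon => //.
by apply: (G_lt hp); rewrite -mcoeff_msupp.
Qed.

Lemma pibar_top (i : 'I_n) m : (i.+1 < n)%N -> (m (nxt i) < m i)%N ->
  exists r, pibar_op i ('X_[m] : {mpoly F[n]}) = msym (sgen i) 'X_[m] + r /\ Gd (Phi m) r.
Proof.
move=> hi hba; have hij : i != nxt i by rewrite nxt_neq.
rewrite pibar_mon ?(ltnW hba) //.
have hc : (m i - m (nxt i) = (m i - m (nxt i)).-1.+1)%N by lia.
rewrite -(big_mkord xpredT (fun k => ('X_[mset i (nxt i) m ((m i).-1 - k) (m (nxt i) + k.+1)] : {mpoly F[n]}))) hc big_nat_recr //=.
set r := \sum_(0 <= k < _) _.
exists r; split.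
  rewrite addrC; congr (_ + _).
  rewrite -[in RHS](mset_id i (nxt i) m) msym_mset //; congr 'X_[_]; congr mset; lia.
rewrite /r big_mkord; apply: Gsum => k _; apply: GX.
have hk := ltn_ord k.
have := Phi_mset m ((m i).-1 - k) (m (nxt i) + k.+1) hij.
have := @convexB n (m i) (m (nxt i)) ((m i).-1 - k) (m (nxt i) + k.+1).
move=> /(_ ltac:(lia) ltac:(lia) ltac:(lia)); lia.
Qed.

End G.

Section Main.
Variables (F : fieldType) (n : nat).

Lemma main_ind (e : 'X_{1..n}) : (forall p q : 'I_n, (p <= q)%N -> (e q <= e p)%N) ->
  forall s (w : 'S_n), reduced_word w s -> Inc e w ->
  exists r : {mpoly F[n]}, pibar_word s 'X_[e] = msym w 'X_[e] + r /\ Gd (Phi e) r.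
Proof.
move=> hdec; elim => [|i s IH] w hred hinc.
  case: hred => _ [hw _].
  have -> : w = 1%g by apply/permP => j; rewrite hw perm1.
  by exists 0; rewrite msym1m addr0; split => //; apply: G0.
have [hi hred' hlt] := red_cons hred.
set w' := (w * sgen i)%g in hred' hlt.
have hv := nxt_val hi.
have ew : w = (w' * sgen i)%g by rewrite /w' -mulgA sgen_invol mulg1.
set p0 := (w'^-1)%g i in hlt; set q0 := (w'^-1)%g (nxt i) in hlt.
have wp0 : w' p0 = i by rewrite /p0 permKV.
have wq0 : w' q0 = nxt i by rewrite /q0 permKV.
have hwx : forall x, w x = sgen i (w' x) by move=> x; rewrite /w' permM /sgen tpermK.
have hinc' : Inc e w'.
  move=> p q hpq hepq; have := hinc p q hpq hepq; rewrite !hwx.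
  have [hp|hp] := eqVneq (w' p) i.
    have [hq|hq] := eqVneq (w' q) (nxt i).
      by rewrite hp hq /=; rewrite hv.
    rewrite sgen_lt //; first by rewrite hp eqxx /= hq.
    by rewrite hp nxt_neq.
  have [hq|hq] := eqVneq (w' q) i.
    have [hp'|hp'] := eqVneq (w' p) (nxt i).
      have : p = q0 by apply: (@perm_inj _ w'); rewrite wq0.
      have : q = p0 by apply: (@perm_inj _ w'); rewrite wp0.
      move=> eq ep; move: hpq hlt; rewrite eq ep; lia.
    by rewrite sgen_lt // ?(negbTE hp) ?(negbTE hp') ?andbF.
  by rewrite sgen_lt // ?(negbTE hp) ?(negbTE hq) ?andbF.
have [r' [hr' hGr']] := IH w' hred' hinc'.
set m := [multinom e ((w'^-1)%g k) | k < n].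
have hm : msym w' 'X_[e] = 'X_[m] :> {mpoly F[n]} by rewrite msymX.
have hmlt : (m (nxt i) < m i)%N.
  rewrite !mnmE -/p0 -/q0.
  have hle : (e q0 <= e p0)%N by apply: hdec; exact: ltnW.
  rewrite ltn_neqAle hle andbT; apply/eqP => heq.
  have := hinc p0 q0 hlt (esym heq); rewrite !hwx wp0 wq0 /sgen tpermL tpermR hv.
  lia.
have [r1 [hr1 hG1]] := pibar_top F hi hmlt.
exists (r1 + pibar_op i r'); split.
  rewrite /= hr' pibar_opD // hm hr1 -hm -msymMm -ew /pibar_op; ring.
apply: GD; first by move: hG1; rewrite /m Phi_perm.
exact: G_pibar.
Qed.


Lemma xI_eq (D : seq nat) : xI F n D = 'X_[eD n D].
Proof.
elim: D => [|t D IH].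
  rewrite /xI big_nil -mpolyX0; congr 'X_[_]; apply/mnmP => k; by rewrite !mnmE.
rewrite /xI big_cons -/(xI F n D) IH mprodXE -mpolyXD; congr 'X_[_].
apply/mnmP => k; rewrite mnmDE mnm_sumE !mnmE /=.
case: (ltnP k t) => hkt.
  rewrite (bigD1 k) //= big1 ?addn0 /mnm1 ?mnmE ?eqxx //.
  by move=> j /andP[_ hj]; rewrite mnmE (negbTE hj).
rewrite big1 //= => j hj; rewrite /mnm1 mnmE; apply/eqP; rewrite eqb0; apply/eqP => ejk.
by move: hj hkt; rewrite ejk; lia.
Qed.

End Main.

Lemma mpolyX_inj (F : fieldType) n (m1 m2 : 'X_{1..n}) :
  'X_[m1] = 'X_[m2] :> {mpoly F[n]} -> m1 = m2.
Proof.
move=> h; have := congr1 (mcoeff m1) h; rewrite !mcoeffX eqxx.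
case: eqP => [//|_] /eqP; by rewrite oner_eq0.
Qed.

Unset Implicit Arguments.
Set Strict Implicit.

Theorem lemma4p1 (F : fieldType) (n : nat) (alpha : seq nat) (w : 'S_n)
    (s : seq 'I_n) :
  is_composition n alpha ->
  {subset Des w <= Dcomp n alpha} ->
  reduced_word w s ->
  (exists r : {mpoly F[n]},
     pibar_word s (xI F n (Dcomp n alpha))
       = msym w (xI F n (Dcomp n alpha)) + r /\
     (forall d, d \in msupp r ->
        forall e, e \in msupp (xI F n (Dcomp n alpha)) -> mprec d e) /\
     (forall d, exists c : int, r@_d = c%:~R)) /\
  (descent_monomial (msym w (xI F n (Dcomp n alpha))) <->
     Des w =i Dcomp n alpha).
Proof.
move=> hcomp hsub hred.
set D := Dcomp n alpha.
have hdec : forall p q : 'I_n, (p <= q)%N -> (eD n D q <= eD n D p)%N.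
  by move=> p q; apply: eD_decr.
have hinc : Inc (eD n D) w := Inc_of_Des hsub.
split.
  have [r [hr hG]] := main_ind F hdec hred hinc.
  exists r; rewrite xI_eq; split => //; split.
    move=> d hd e'; rewrite msuppX inE => /eqP ->.
    apply: Phi_mprec; apply: (G_lt hG); by rewrite -mcoeff_msupp.
  by move=> d; have [c [hc _]] := hG d; exists c.
split.
  case=> u hu; move: hu; rewrite !xI_eq !msymX => /mpolyX_inj /mnmP hu.
  set eu := eD n (Des u).
  have hk : forall j, eD n D j = eu ((w * u^-1)%g j).
    move=> j; have := hu (w j); rewrite !mnmE permK => ->; by rewrite permM.
  have hdecu : forall p q : 'I_n, (p <= q)%N -> (eu q <= eu p)%N.
    by move=> p q; apply: eD_decr.
  have st1 := decr_perm_eq hdec hdecu hk.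
  have incu : Inc (eD n D) u.
    move=> p q hpq; rewrite !st1; exact: (Inc_of_Des (fun x (h : x \in Des u) => h)).
  have st3 : forall j, eD n D j = eD n D ((w * u^-1)%g j) by move=> j; rewrite hk st1.
  have ewu := Inc_perm_id hinc incu st3; subst u.
  move=> t.
  case: (boolP (0 < t < n)%N) => [/andP[ht0 htn]|hnt].
    have hk1 : (t.-1 < n)%N by lia.
    set k := Ordinal hk1; set k1 := Ordinal htn.
    have ek : (k1 : nat) = k.+1 by rewrite /= prednK.
    have et : t = k.+1 by rewrite /= prednK.
    by rewrite et (mem_eD _ ek) (mem_eD _ ek) !st1.
  apply/idP/idP => h; exfalso; move/negP: hnt; apply.
    exact: Des_range h.
  exact: Dcomp_range hcomp h.
move=> heq; exists w; rewrite !xI_eq; congr (msym w 'X_[_]).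
have hp : perm_eq D (Des w).
  by apply: uniq_perm; [exact: Dcomp_uniq | exact: Des_uniq | move=> x; rewrite heq].
apply/mnmP => k; rewrite !mnmE; by move/seq.permP: hp => ->.
Qed.
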